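(* Let $X$ be a real Hilbert space, $I=\{1,\dots,m\}$, and let $(T_i)_{i\in I}$ be averaged nonexpansive operators $X\to X$ with fixed point sets $Z_i=\operatorname{Fix}T_i$. Suppose each $T_i$ is boundedly regular, $Z=\bigcap_{i\in I}Z_i\neq\varnothing$, and the family $(Z_i)_{i\in I}$ is boundedly regular. Then for every $x_0\in X$ the sequence $((T_m\cdots T_1)^nx_0)_{n\in\mathbb N}$ converges strongly (in norm) to some point of $Z$.
   Context: $T$ is averaged nonexpansive if $T=(1-\lambda)\mathrm{Id}+\lambda N$ with $\lambda\in[0,1[$ and $N$ nonexpansive. An operator $T$ with $\operatorname{Fix}T\ne\varnothing$ is boundedly regular if for every bounded sequence $(x_n)$ with $x_n-Tx_n\to0$ we have $d_{\operatorname{Fix}T}(x_n)\to0$. A finite family $(C_i)_{i\in I}$ of closed convex sets with $C=\bigcap_iC_i\ne\varnothing$ is boundedly regular if for every bounded sequence $(x_n)$, $\max_{i}d_{C_i}(x_n)\to0$ implies $d_C(x_n)\to0$. *)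

(* Defs.v *)
From Stdlib Require Import Reals Lra List Arith ClassicalEpsilon.
Open Scope R_scope.

Record RealHilbert := {
  car :> Type;
  vzero : car;
  vadd : car -> car -> car;
  vopp : car -> car;
  vscal : R -> car -> car;
  inner : car -> car -> R;
  vadd_assoc : forall x y z, vadd x (vadd y z) = vadd (vadd x y) z;
  vadd_comm : forall x y, vadd x y = vadd y x;
  vadd_0 : forall x, vadd x vzero = x;
  vadd_opp : forall x, vadd x (vopp x) = vzero;
  vscal_1 : forall x, vscal 1 x = x;
  vscal_assoc : forall a b x, vscal a (vscal b x) = vscal (a * b) x;
  vscal_distr_v : forall a x y, vscal a (vadd x y) = vadd (vscal a x) (vscal a y);
  vscal_distr_s : forall a b x, vscal (a + b) x = vadd (vscal a x) (vscal b x);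
  inner_sym : forall x y, inner x y = inner y x;
  inner_add_l : forall x y z, inner (vadd x y) z = inner x z + inner y z;
  inner_scal_l : forall a x y, inner (vscal a x) y = a * inner x y;
  inner_pos : forall x, 0 <= inner x x;
  inner_def : forall x, inner x x = 0 -> x = vzero;
  complete : forall u : nat -> car,
    (forall eps, 0 < eps -> exists N, forall p q, (N <= p)%nat -> (N <= q)%nat ->
        sqrt (inner (vadd (u p) (vopp (u q))) (vadd (u p) (vopp (u q)))) < eps) ->
    exists l, Un_cv (fun n => sqrt (inner (vadd (u n) (vopp l)) (vadd (u n) (vopp l)))) 0
}.

Section Ops.
Variable X : RealHilbert.

Definition vsub (x y : X) : X := vadd X x (vopp X y).
Definition norm (x : X) : R := sqrt (inner X x x).

Definition nonexpansive (N : X -> X) : Prop :=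
  forall x y, norm (vsub (N x) (N y)) <= norm (vsub x y).

Definition averaged (T : X -> X) : Prop :=
  exists (lam : R) (N : X -> X), 0 <= lam < 1 /\ nonexpansive N /\
    forall x, T x = vadd X (vscal X (1 - lam) x) (vscal X lam (N x)).

Definition Fix (T : X -> X) : X -> Prop := fun x => T x = x.

Definition is_dist_set (C : X -> Prop) (x : X) (d : R) : Prop :=
  (forall c, C c -> d <= norm (vsub x c)) /\
  (forall e, (forall c, C c -> e <= norm (vsub x c)) -> e <= d).

(** The distance function d_C (its value is unspecified when C is empty). *)
Definition dist_set (C : X -> Prop) (x : X) : R :=
  epsilon (inhabits 0) (is_dist_set C x).

Definition bounded_seq (u : nat -> X) : Prop :=
  exists M, forall n, norm (u n) <= M.

Definition boundedly_regular_op (T : X -> X) : Prop :=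
  (exists z, Fix T z) /\
  forall u : nat -> X, bounded_seq u ->
    Un_cv (fun n => norm (vsub (u n) (T (u n)))) 0 ->
    Un_cv (fun n => dist_set (Fix T) (u n)) 0.

Definition inter_family (m : nat) (C : nat -> X -> Prop) : X -> Prop :=
  fun x => forall i, (i < m)%nat -> C i x.

(** max_{i < m} d_{C_i}(x)  (distances are >= 0, so starting the fold at 0 is harmless). *)
Definition max_dist (m : nat) (C : nat -> X -> Prop) (x : X) : R :=
  fold_right Rmax 0 (map (fun i => dist_set (C i) x) (seq 0 m)).

Definition boundedly_regular_family (m : nat) (C : nat -> X -> Prop) : Prop :=
  (exists z, inter_family m C z) /\
  forall u : nat -> X, bounded_seq u ->
    Un_cv (fun n => max_dist m C (u n)) 0 ->
    Un_cv (fun n => dist_set (inter_family m C) (u n)) 0.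

(** Product T_{m-1} ∘ ... ∘ T_0 (indices shifted: T_i for i < m). *)
Fixpoint comp_ops (T : nat -> X -> X) (k : nat) (x : X) : X :=
  match k with
  | O => x
  | S k' => T k' (comp_ops T k' x)
  end.

End Ops.

(* Main.v *)
Require Import Defs.
From Stdlib Require Import Reals Lra Lia List Arith ClassicalEpsilon Classical.
Open Scope R_scope.

Definition nsq (X : RealHilbert) (x : X) : R := inner X x x.

Lemma inner_add_r (X : RealHilbert) (x y z : X) :
  inner X x (vadd X y z) = inner X x y + inner X x z.
Proof. rewrite (inner_sym X x), inner_add_l, (inner_sym X y), (inner_sym X z); reflexivity. Qed.
Lemma inner_scal_r (X : RealHilbert) a (x y : X) :
  inner X x (vscal X a y) = a * inner X x y.
Proof. rewrite (inner_sym X x), inner_scal_l, (inner_sym X y); reflexivity. Qed.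
Lemma inner_zero_l (X : RealHilbert) (y : X) : inner X (vzero X) y = 0.
Proof. pose proof (inner_add_l X (vzero X) (vzero X) y) as H. rewrite vadd_0 in H. lra. Qed.
Lemma inner_zero_r (X : RealHilbert) (y : X) : inner X y (vzero X) = 0.
Proof. rewrite inner_sym; apply inner_zero_l. Qed.
Lemma inner_opp_l (X : RealHilbert) (x y : X) : inner X (vopp X x) y = - inner X x y.
Proof. pose proof (inner_add_l X x (vopp X x) y) as H. rewrite vadd_opp, inner_zero_l in H. lra. Qed.
Lemma inner_opp_r (X : RealHilbert) (x y : X) : inner X y (vopp X x) = - inner X y x.
Proof. rewrite (inner_sym X y), inner_opp_l, (inner_sym X x); reflexivity. Qed.

Hint Rewrite inner_add_l inner_add_r inner_scal_l inner_scal_r inner_opp_l inner_opp_r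
  inner_zero_l inner_zero_r : inr.

Ltac expand := unfold nsq, vsub in *; autorewrite with inr in *.

Lemma nsq_pos (X : RealHilbert) (x : X) : 0 <= nsq X x.
Proof. apply inner_pos. Qed.
Lemma norm_pos (X : RealHilbert) (x : X) : 0 <= norm X x.
Proof. apply sqrt_pos. Qed.

Lemma sub_zero (X : RealHilbert) (a b : X) : vsub X a b = vzero X -> a = b.
Proof.
  unfold vsub; intro H.
  rewrite <- (vadd_0 X a).
  assert (E : vadd X (vopp X b) b = vzero X) by (rewrite vadd_comm; apply vadd_opp).
  rewrite <- E, vadd_assoc, H, vadd_comm, vadd_0; reflexivity.
Qed.

Lemma cs (X : RealHilbert) (x y : X) :
  inner X x y * inner X x y <= inner X x x * inner X y y.
Proof.
  destruct (Req_dec (inner X y y) 0) as [H|H].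
  - apply inner_def in H. subst. autorewrite with inr. nra.
  - pose proof (inner_pos X y) as Hc.
    pose proof (inner_pos X (vadd X (vscal X (inner X y y) x) (vscal X (- inner X x y) y))) as P.
    autorewrite with inr in P. rewrite (inner_sym X y x) in P.
    assert (Q : 0 <= inner X y y * (inner X x x * inner X y y - inner X x y * inner X x y)) by nra.
    nra.
Qed.

Lemma norm_tri (X : RealHilbert) (x y z : X) :
  norm X (vsub X x z) <= norm X (vsub X x y) + norm X (vsub X y z).
Proof.
  set (u := vsub X x y). set (w := vsub X y z).
  assert (E : nsq X (vsub X x z) = nsq X u + 2 * inner X u w + nsq X w).
  { unfold u, w; expand. rewrite (inner_sym X y x), (inner_sym X z x), (inner_sym X z y). ring. }
  pose proof (cs X u w) as C.
  pose proof (nsq_pos X u). pose proof (nsq_pos X w).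
  assert (B : inner X u w <= norm X u * norm X w).
  { unfold norm. rewrite <- sqrt_mult_alt by auto.
    destruct (Rle_dec (inner X u w) 0). { pose proof (sqrt_pos (inner X u u * inner X w w)); lra. }
    rewrite <- (sqrt_square (inner X u w)) by lra. apply sqrt_le_1_alt. exact C. }
  unfold norm at 1. fold (nsq X (vsub X x z)). rewrite E.
  pose proof (norm_pos X u). pose proof (norm_pos X w).
  rewrite <- (sqrt_square (norm X u + norm X w)) by lra.
  apply sqrt_le_1_alt.
  assert (nsq X u = norm X u * norm X u) by (unfold norm; rewrite sqrt_sqrt; auto).
  assert (nsq X w = norm X w * norm X w) by (unfold norm; rewrite sqrt_sqrt; auto).
  nra.
Qed.

Lemma norm_sym (X : RealHilbert) (x y : X) : norm X (vsub X x y) = norm X (vsub X y x).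
Proof. unfold norm; f_equal. expand. rewrite (inner_sym X y x). ring. Qed.

Lemma norm_sub0 (X : RealHilbert) (x : X) : norm X (vsub X x (vzero X)) = norm X x.
Proof. unfold norm; f_equal. expand. ring. Qed.

Lemma norm_self (X : RealHilbert) (x : X) : norm X (vsub X x x) = 0.
Proof. unfold norm. replace (inner X (vsub X x x) (vsub X x x)) with 0. apply sqrt_0. expand. ring. Qed.

Lemma norm_le (X : RealHilbert) (a b : X) : nsq X a <= nsq X b -> norm X a <= norm X b.
Proof. apply sqrt_le_1_alt. Qed.

Lemma nsq_le (X : RealHilbert) (a b : X) : norm X a <= norm X b -> nsq X a <= nsq X b.
Proof. apply sqrt_le_0; apply inner_pos. Qed.
Lemma avg_ineq (X : RealHilbert) (T : X -> X) : averaged X T ->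
  exists c, 0 < c /\ forall x z, T z = z ->
    nsq X (vsub X (T x) z) + c * nsq X (vsub X x (T x)) <= nsq X (vsub X x z).
Proof.
  intros [lam [N [Hl [HN HT]]]]. exists (1 - lam). split; [lra|]. intros x z Hz.
  assert (HNz : lam * nsq X (vsub X (N x) z) <= lam * nsq X (vsub X x z)).
  { destruct (Req_dec lam 0) as [E|E].
    - subst. lra.
    - assert (Nz : N z = z).
      { assert (E1 : nsq X (vsub X z (T z)) = lam ^ 2 * nsq X (vsub X z (N z))).
        { rewrite HT. expand. rewrite (inner_sym X (N z) z). ring. }
        rewrite Hz in E1.
        assert (E2 : nsq X (vsub X z z) = 0) by (expand; ring).
        rewrite E2 in E1.
        assert (E3 : nsq X (vsub X z (N z)) = 0).
        { symmetry in E1. apply Rmult_integral in E1. destruct E1 as [E1|E1]; auto.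
          exfalso. exact (pow_nonzero lam 2 E E1). }
        symmetry. apply sub_zero. apply inner_def. exact E3. }
      pose proof (HN x z) as H. rewrite Nz in H. apply nsq_le in H.
      apply Rmult_le_compat_l; lra. }
  assert (E : nsq X (vsub X (T x) z) + (1 - lam) * nsq X (vsub X x (T x)) =
     (1 - lam) * nsq X (vsub X x z) + lam * nsq X (vsub X (N x) z)
       - lam * (1 - lam) * (1 - lam) * nsq X (vsub X x (N x))).
  { rewrite !HT. expand.
    rewrite (inner_sym X (N x) x), (inner_sym X z x), (inner_sym X z (N x)). ring. }
  pose proof (nsq_pos X (vsub X x (N x))).
  assert (0 <= lam * (1 - lam) * (1 - lam) * nsq X (vsub X x (N x))).
  { repeat apply Rmult_le_pos; lra. }
  lra.
Qed.

Lemma dist_spec (X : RealHilbert) (C : X -> Prop) (x : X) :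
  (exists c, C c) -> is_dist_set X C x (dist_set X C x).
Proof.
  intros [c0 Hc0]. unfold dist_set. apply epsilon_spec.
  set (E := fun r => exists c, C c /\ r = - norm X (vsub X x c)).
  assert (Hb : bound E).
  { exists 0. intros r [c [_ ->]]. pose proof (norm_pos X (vsub X x c)); lra. }
  assert (Hne : exists r, E r) by (exists (- norm X (vsub X x c0)); exists c0; auto).
  destruct (completeness E Hb Hne) as [mm [Hub Hlub]].
  exists (- mm). split.
  - intros c Hc. assert (E (- norm X (vsub X x c))) by (exists c; auto).
    pose proof (Hub _ H). lra.
  - intros e He. assert (mm <= - e).
    { apply Hlub. intros r [c [Hc ->]]. pose proof (He c Hc). lra. }
    lra.
Qed.

Lemma dist_nonneg (X : RealHilbert) (C : X -> Prop) (x : X) :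
  (exists c, C c) -> 0 <= dist_set X C x.
Proof.
  intros H. destruct (dist_spec X C x H) as [_ H2]. apply H2.
  intros c _. apply norm_pos.
Qed.

Lemma dist_lip (X : RealHilbert) (C : X -> Prop) (x y : X) :
  (exists c, C c) -> dist_set X C x <= norm X (vsub X x y) + dist_set X C y.
Proof.
  intros H. destruct (dist_spec X C x H) as [H1 _]. destruct (dist_spec X C y H) as [_ H2].
  cut (dist_set X C x - norm X (vsub X x y) <= dist_set X C y). lra.
  apply H2. intros c Hc. pose proof (H1 c Hc). pose proof (norm_tri X x y c). lra.
Qed.

Lemma dist_approx (X : RealHilbert) (C : X -> Prop) (x : X) (e : R) :
  (exists c, C c) -> dist_set X C x < e -> exists c, C c /\ norm X (vsub X x c) < e.
Proof.
  intros H He. destruct (classic (exists c, C c /\ norm X (vsub X x c) < e)) as [?|Hn]; auto.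
  exfalso. destruct (dist_spec X C x H) as [_ H2].
  assert (e <= dist_set X C x).
  { apply H2. intros c Hc. destruct (Rlt_le_dec (norm X (vsub X x c)) e); auto.
    exfalso; apply Hn; exists c; auto. }
  lra.
Qed.

Lemma cv_squeeze (u v : nat -> R) : (forall n, 0 <= u n <= v n) -> Un_cv v 0 -> Un_cv u 0.
Proof.
  intros H Hv eps He. destruct (Hv eps He) as [N HN]. exists N. intros n Hn.
  specialize (HN n Hn). specialize (H n). unfold R_dist in *.
  rewrite Rabs_right in * by lra. lra.
Qed.

Lemma cv_plus0 (u v : nat -> R) : Un_cv u 0 -> Un_cv v 0 -> Un_cv (fun n => u n + v n) 0.
Proof. intros. replace 0 with (0 + 0) by ring. apply CV_plus; auto. Qed.

Lemma cv_const0 : Un_cv (fun _ => 0) 0.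
Proof. intros eps He. exists 0%nat. intros. unfold R_dist. rewrite Rminus_0_r, Rabs_R0. auto. Qed.

Lemma cv_scale (u v : nat -> R) (c : R) : 0 < c -> (forall n, 0 <= u n) ->
  (forall n, c * u n <= v n) -> Un_cv v 0 -> Un_cv u 0.
Proof.
  intros Hc H0 H Hv eps He. destruct (Hv (c * eps)) as [N HN]. { nra. }
  exists N. intros n Hn. specialize (HN n Hn). specialize (H n). specialize (H0 n).
  unfold R_dist in *. rewrite Rminus_0_r in *.
  assert (v n >= 0) by nra. rewrite Rabs_right in HN by lra.
  rewrite Rabs_right by lra. nra.
Qed.

Lemma cv_sqrt (u : nat -> R) : (forall n, 0 <= u n) -> Un_cv u 0 -> Un_cv (fun n => sqrt (u n)) 0.
Proof.
  intros H0 Hu eps He. destruct (Hu (eps * eps)) as [N HN]. { nra. }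
  exists N. intros n Hn. specialize (HN n Hn). specialize (H0 n).
  unfold R_dist in *. rewrite Rminus_0_r in *. rewrite Rabs_right in HN by lra.
  pose proof (sqrt_pos (u n)). rewrite Rabs_right by lra.
  rewrite <- (sqrt_square eps) by lra. apply sqrt_lt_1_alt. lra.
Qed.

Lemma cv_maxlist (f : nat -> nat -> R) (l : list nat) :
  (forall i, In i l -> forall n, 0 <= f i n) -> (forall i, In i l -> Un_cv (fun n => f i n) 0) ->
  Un_cv (fun n => fold_right Rmax 0 (map (fun i => f i n) l)) 0.
Proof.
  intros H0. induction l as [|a l IH]; intros H.
  - simpl. apply cv_const0.
  - simpl. assert (Hr : forall n, 0 <= fold_right Rmax 0 (map (fun i => f i n) l)).
    { intro n. clear IH H H0. induction l as [|b l IHl]; simpl. lra.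
      pose proof (Rmax_r (f b n) (fold_right Rmax 0 (map (fun i => f i n) l))). lra. }
    apply cv_squeeze with (v := fun n => f a n + fold_right Rmax 0 (map (fun i => f i n) l)).
    + intro n. pose proof (Rmax_r (f a n) (fold_right Rmax 0 (map (fun i => f i n) l))).
      split. specialize (Hr n). lra.
      apply Rmax_lub; specialize (Hr n); specialize (H0 a (or_introl eq_refl) n); lra.
    + apply cv_plus0. apply H; simpl; auto. apply IH. intros; apply H0; simpl; auto.
      intros; apply H; simpl; auto.
Qed.

Lemma chain_mono (X : RealHilbert) (m : nat) (T : nat -> X -> X)
  (Hc : forall i, (i < m)%nat -> forall x z, T i z = z ->
     nsq X (vsub X (T i x) z) <= nsq X (vsub X x z))
  (z : X) (Hz : inter_family X m (fun i => Fix X (T i)) z) (x : X) :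
  forall k j, (j <= k <= m)%nat ->
    nsq X (vsub X (comp_ops X T k x) z) <= nsq X (vsub X (comp_ops X T j x) z).
Proof.
  induction k; intros j Hj.
  - replace j with 0%nat by lia. lra.
  - destruct (Nat.eq_dec j (S k)) as [->|Hne]. lra.
    simpl. eapply Rle_trans. apply Hc. lia. exact (Hz k ltac:(lia)). apply IHk. lia.
Qed.

Theorem theorem7p1 (X : RealHilbert) (m : nat) (T : nat -> X -> X)
  (Havg : forall i, (i < m)%nat -> averaged X (T i))
  (Hreg : forall i, (i < m)%nat -> boundedly_regular_op X (T i))
  (HZ : exists z, inter_family X m (fun i => Fix X (T i)) z)
  (Hfam : boundedly_regular_family X m (fun i => Fix X (T i))) :
  forall x0 : X, exists z, inter_family X m (fun i => Fix X (T i)) z /\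
    Un_cv (fun n => norm X (vsub X (Nat.iter n (comp_ops X T m) x0) z)) 0.
Proof.
  intros x0.
  assert (Hc : forall i, (i<m)%nat -> forall x z, T i z = z ->
     nsq X (vsub X (T i x) z) <= nsq X (vsub X x z)).
  { intros i Hi x z Hz. destruct (avg_ineq X (T i) (Havg i Hi)) as [c [Hc H]].
    specialize (H x z Hz). pose proof (nsq_pos X (vsub X x (T i x))). nra. }
  set (F := comp_ops X T m).
  set (xs := fun n => Nat.iter n F x0).
  assert (xsS : forall n, xs (S n) = F (xs n)) by reflexivity.
  assert (Fejer : forall z, inter_family X m (fun i => Fix X (T i)) z -> forall n p, (n <= p)%nat ->
     nsq X (vsub X (xs p) z) <= nsq X (vsub X (xs n) z)).
  { intros z Hz n p Hnp. induction Hnp. lra. rewrite xsS. eapply Rle_trans; [|exact IHHnp].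
    unfold F. apply (chain_mono X m T Hc z Hz (xs m0) m 0%nat). lia. }
  destruct HZ as [z0 Hz0].
  set (a := fun n => nsq X (vsub X (xs n) z0)).
  assert (Ha : Un_cv (fun n => a n - a (S n)) 0).
  { destruct (decreasing_cv a) as [l Hl].
    - intro n. apply Fejer; auto.
    - exists 0. intros r [n ->]. unfold opp_seq. pose proof (nsq_pos X (vsub X (xs n) z0)). unfold a. lra.
    - intros eps He. destruct (Hl (eps/2)) as [N HN]. lra. exists N. intros n Hn.
      pose proof (HN n Hn) as A1. pose proof (HN (S n) ltac:(lia)) as A2. unfold R_dist in *.
      rewrite Rminus_0_r. apply Rabs_def2 in A1. apply Rabs_def2 in A2. apply Rabs_def1; lra. }
  set (y := fun n i => comp_ops X T i (xs n)).
  assert (Hstep : forall i, (i<m)%nat -> Un_cv (fun n => norm X (vsub X (y n i) (T i (y n i)))) 0).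
  { intros i Hi. destruct (avg_ineq X (T i) (Havg i Hi)) as [c [Hc0 Hci]].
    unfold norm. apply cv_sqrt. intros; apply nsq_pos.
    apply cv_scale with (c := c) (v := fun n => a n - a (S n)); auto. intros; apply nsq_pos.
    intros n. unfold a. rewrite xsS.
    pose proof (Hci (y n i) z0 (Hz0 i Hi)) as H1.
    pose proof (chain_mono X m T Hc z0 Hz0 (xs n) m (S i) ltac:(lia)) as H2.
    pose proof (chain_mono X m T Hc z0 Hz0 (xs n) i 0%nat ltac:(lia)) as H3.
    simpl in H2. simpl in H3. unfold y, F in *. unfold nsq in *. lra. }
  assert (Hclose : forall i, (i <= m)%nat -> Un_cv (fun n => norm X (vsub X (xs n) (y n i))) 0).
  { induction i; intros Hi.
    - unfold y; simpl. eapply cv_squeeze; [|apply cv_const0]. intro n. rewrite norm_self. lra.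
    - apply cv_squeeze with (v := fun n => norm X (vsub X (xs n) (y n i)) +
                                      norm X (vsub X (y n i) (T i (y n i)))).
      + intro n. split. apply norm_pos. apply norm_tri.
      + apply cv_plus0. apply IHi; lia. apply Hstep; lia. }
  set (M := norm X (vsub X x0 z0) + norm X z0).
  assert (Hbd : forall i, (i <= m)%nat -> bounded_seq X (fun n => y n i)).
  { intros i Hi. exists M. intros n.
    assert (H : nsq X (vsub X (y n i) z0) <= nsq X (vsub X x0 z0)).
    { eapply Rle_trans. apply (chain_mono X m T Hc z0 Hz0 (xs n) i 0%nat); lia.
      apply (Fejer z0 Hz0 0%nat n); lia. }
    apply norm_le in H. pose proof (norm_tri X (y n i) z0 (vzero X)) as H0.
    rewrite !norm_sub0 in H0. unfold M. lra. }
  assert (HZi : forall i, (i<m)%nat -> exists c, Fix X (T i) c).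
  { intros i Hi; exists z0; apply Hz0; auto. }
  assert (Hdi : forall i, (i<m)%nat -> Un_cv (fun n => dist_set X (Fix X (T i)) (xs n)) 0).
  { intros i Hi.
    pose proof ((proj2 (Hreg i Hi)) (fun n => y n i) (Hbd i ltac:(lia)) (Hstep i Hi)) as Hd.
    apply cv_squeeze with (v := fun n => norm X (vsub X (xs n) (y n i)) +
                                      dist_set X (Fix X (T i)) (y n i)).
    - intro n. split. apply dist_nonneg; auto. apply dist_lip; auto.
    - apply cv_plus0; auto. apply Hclose; lia. }
  set (Z := inter_family X m (fun i => Fix X (T i))).
  assert (HZne : exists c, Z c) by (exists z0; exact Hz0).
  assert (HdZ : Un_cv (fun n => dist_set X Z (xs n)) 0).
  { apply (proj2 Hfam). exact (Hbd 0%nat ltac:(lia)).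
    unfold max_dist. apply (cv_maxlist (fun i n => dist_set X (Fix X (T i)) (xs n))).
    - intros i Hin n. apply in_seq in Hin. apply dist_nonneg; apply HZi; lia.
    - intros i Hin. apply in_seq in Hin. apply Hdi; lia. }
  assert (Hcauchy : forall eps, 0 < eps -> exists N, forall p q, (N<=p)%nat -> (N<=q)%nat ->
     norm X (vsub X (xs p) (xs q)) < eps).
  { intros eps He. destruct (HdZ (eps/2)) as [N HN]. lra.
    specialize (HN N (le_n N)). unfold R_dist in HN. rewrite Rminus_0_r in HN.
    destruct (dist_approx X Z (xs N) (eps/2) HZne) as [c [Hcz Hnc]].
    { pose proof (Rle_abs (dist_set X Z (xs N))). lra. }
    exists N. intros p q Hp Hq.
    pose proof (norm_le X _ _ (Fejer c Hcz N p Hp)) as A1.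
    pose proof (norm_le X _ _ (Fejer c Hcz N q Hq)) as A2.
    pose proof (norm_tri X (xs p) c (xs q)) as A3. rewrite (norm_sym X c (xs q)) in A3. lra. }
  destruct (complete X xs Hcauchy) as [l Hl].
  exists l. split; [|exact Hl].
  intros i Hi. unfold Fix. apply sub_zero. apply inner_def.
  apply sqrt_eq_0. apply inner_pos.
  change (norm X (vsub X (T i l) l) = 0).
  apply Rle_antisym; [|apply norm_pos].
  apply Rnot_lt_le. intro Hpos.
  destruct (Hl (norm X (vsub X (T i l) l) / 4)) as [N1 HN1]. lra.
  destruct (HdZ (norm X (vsub X (T i l) l) / 4)) as [N2 HN2]. lra.
  specialize (HN1 (Nat.max N1 N2) ltac:(lia)). specialize (HN2 (Nat.max N1 N2) ltac:(lia)).
  set (n := Nat.max N1 N2) in *.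
  unfold R_dist in HN1, HN2. rewrite Rminus_0_r in HN1, HN2.
  change (Rabs (norm X (vsub X (xs n) l)) < norm X (vsub X (T i l) l) / 4) in HN1.
  destruct (dist_approx X Z (xs n) (norm X (vsub X (T i l) l) / 4) HZne) as [c [Hcz Hnc]].
  { pose proof (Rle_abs (dist_set X Z (xs n))). lra. }
  pose proof (Rle_abs (norm X (vsub X (xs n) l))) as A1.
  pose proof (norm_tri X l (xs n) c) as B1. rewrite (norm_sym X l (xs n)) in B1.
  assert (B2 : norm X (vsub X (T i l) c) <= norm X (vsub X l c)).
  { apply norm_le. apply Hc; auto. exact (Hcz i Hi). }
  pose proof (norm_tri X (T i l) c l) as B3. rewrite (norm_sym X c l) in B3.
  lra.
Qed.
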